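(* Let $A\in\mathbb{C}^{n\times n}$, and fix $A^-\in A\{1\}$ and $A^{GD}\in A\{GD\}$. For $X\in\mathbb{C}^{n\times n}$ the following are equivalent: (i) $X = A^{-}AA^{GD}$; (ii) $AX = AA^{GD}$ and $R(X)=R(A^{-}A)$; (iii) $A^{GD}AX = A^{GD}AA^{GD}$ and $R(X)=R(A^{-}A)$.
   Context: For $A\in\mathbb{C}^{n\times n}$, $ind(A)$ is the smallest nonnegative integer $k$ with $\mathrm{rank}(A^k)=\mathrm{rank}(A^{k+1})$. $A\{1\}$ is the set of matrices $X$ with $AXA=A$. With $k=ind(A)$, $A\{GD\}$ is the set of G-Drazin inverses of $A$: matrices $X$ with $AXA=A$, $XA^{k+1}=A^k$, $A^{k+1}X=A^k$. $R(\cdot)$ denotes range. The matrix $A^-AA^{GD}$ is called the 1GD inverse of $A$ associated with $A^-$ and $A^{GD}$. *)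

(* Defs.v *)
From HB Require Import structures.
From mathcomp Require Import all_boot all_order all_algebra.
Set Implicit Arguments. Unset Strict Implicit. Unset Printing Implicit Defensive.
Import Order.TTheory GRing.Theory.
Local Open Scope ring_scope.

(* Range (column space) R(A) of a matrix, represented canonically as the
   row space of A^T (genmx gives a canonical representative, so
   mxrange A = mxrange B  <->  R(A) = R(B)). *)
Definition mxrange (F : fieldType) (m n : nat) (A : 'M[F]_(m, n)) : 'M[F]_m :=
  (<< A^T >>)%MS.

Lemma mxindex_ex (F : fieldType) (n : nat) (A : 'M[F]_n) :
  exists k, \rank (A ^+ k) == \rank (A ^+ k.+1).
Proof.
have key : forall k, (forall j, (j < k)%N -> \rank (A ^+ j) != \rank (A ^+ j.+1)) ->
  (\rank (A ^+ k) + k <= n)%N.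
  elim=> [|k IH] H; first by rewrite addn0 rank_leq_row.
  have le : (\rank (A ^+ k.+1) <= \rank (A ^+ k))%N.
    by rewrite exprSr mxrankM_maxl.
  have ne := H k (ltnSn k).
  have lt : (\rank (A ^+ k.+1) < \rank (A ^+ k))%N by rewrite ltn_neqAle eq_sym ne le.
  have := IH (fun j hj => H j (ltnW hj)).
  rewrite addnS; apply: leq_trans; rewrite ltn_add2r //.
case: (boolP [exists j : 'I_n.+1, \rank (A ^+ j) == \rank (A ^+ j.+1)]).
  by case/existsP=> j hj; exists j.
move/existsPn=> H; exfalso.
have := key n.+1 (fun j hj => H (Ordinal hj)).
by rewrite addnS ltnNge leq_addl.
Qed.

Definition mxind (F : fieldType) (n : nat) (A : 'M[F]_n) : nat :=
  ex_minn (mxindex_ex A).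

Definition inv1 (F : fieldType) (n : nat) (A X : 'M[F]_n) : Prop :=
  A *m X *m A = A.

Definition invGD (F : fieldType) (n : nat) (A X : 'M[F]_n) : Prop :=
  let k := mxind A in
  [/\ A *m X *m A = A, X *m A ^+ k.+1 = A ^+ k & A ^+ k.+1 *m X = A ^+ k].

(* Main.v *)
Require Import Defs.
From HB Require Import structures.
From mathcomp Require Import all_boot all_order all_algebra.
Import GRing.Theory.
Local Open Scope ring_scope.

Lemma rng_sub (F : fieldType) (n : nat) (X Y : 'M[F]_n) :
  (X^T <= Y^T)%MS -> exists W, X = Y *m W.
Proof.
case/submxP=> D HD; exists D^T.
by rewrite -[X]trmxK HD trmx_mul trmxK.
Qed.

Lemma sub_rng (F : fieldType) (n : nat) (X Y W : 'M[F]_n) :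
  X = Y *m W -> (X^T <= Y^T)%MS.
Proof. by move=> ->; rewrite trmx_mul submxMl. Qed.

Lemma rng_eq (F : fieldType) (n : nat) (X Y : 'M[F]_n) :
  mxrange X = mxrange Y -> (X^T <= Y^T)%MS /\ (Y^T <= X^T)%MS.
Proof. by rewrite /mxrange => /genmxP /andP. Qed.

Lemma eq_rng (F : fieldType) (n : nat) (X Y : 'M[F]_n) :
  (X^T <= Y^T)%MS -> (Y^T <= X^T)%MS -> mxrange X = mxrange Y.
Proof. by move=> h1 h2; rewrite /mxrange; apply/genmxP; rewrite h1 h2. Qed.

Theorem theorem3p5 (F : fieldType) (n : nat) (A Am Agd X : 'M[F]_n) :
  inv1 A Am -> invGD A Agd ->
  [<-> X = Am *m A *m Agd;
       A *m X = A *m Agd /\ mxrange X = mxrange (Am *m A);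
       Agd *m A *m X = Agd *m A *m Agd /\ mxrange X = mxrange (Am *m A)].
Proof.
rewrite /inv1 => H1 [HG _ _].
tfae.
- move=> ->; split; first by rewrite !mulmxA H1.
  apply: eq_rng; first exact: (@sub_rng _ _ _ _ Agd).
  apply: (@sub_rng _ _ _ _ A).
  by rewrite -!mulmxA (mulmxA A Agd) HG.
- by case=> h r; split=> //; rewrite -!mulmxA h.
- case=> h r.
  have hA : A *m X = A *m Agd.
    by rewrite -{1}HG -!mulmxA (mulmxA Agd A X) h !mulmxA HG.
  move: r => /rng_eq [s _].
  move: s => /rng_sub [W HW].
  have hW : A *m W = A *m Agd.
    by rewrite -hA HW !mulmxA H1.
  by rewrite HW -!mulmxA hW.
Qed.
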